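(* If $G$ is a graph with no isolated vertices, then $\chi_{\mu_2}(G)\le \gamma_t(G)$.
   Context: A set $D\subseteq V(G)$ is a total dominating set if every vertex of $G$ has a neighbor in $D$; $\gamma_t(G)$ is the minimum cardinality of a total dominating set. A set $M\subseteq V(G)$ is a $2$-distance mutual-visibility set if for every two vertices $u,v\in M$ there exists a shortest $u,v$-path of length at most $2$ none of whose internal vertices lies in $M$. $\chi_{\mu_2}(G)$ is the minimum cardinality of a partition of $V(G)$ into $2$-distance mutual-visibility sets. *)

(* Defs.v *)
From mathcomp Require Import all_boot.
Set Implicit Arguments. Unset Strict Implicit. Unset Printing Implicit Defensive.

Definition simple_graph (T : finType) (e : rel T) : Prop :=
  symmetric e /\ irreflexive e.

Definition no_isolated (T : finType) (e : rel T) : Prop :=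
  forall v : T, exists u : T, e v u.

Definition total_dominating (T : finType) (e : rel T) (D : {set T}) : bool :=
  [forall v : T, [exists u in D, e v u]].

(* gamma_t(G): minimum cardinality of a total dominating set
   (default #|T| is attained by [set: T] when G has no isolated vertices). *)
Definition gamma_t (T : finType) (e : rel T) : nat :=
  \big[minn/#|T|]_(D : {set T} | total_dominating e D) #|D|.

(* M is a 2-distance mutual-visibility set: for all u, v in M there is a
   shortest u,v-path of length at most 2 with no internal vertex in M.
   For u = v the trivial path works; if u, v adjacent the edge works;
   otherwise the distance must be 2 and the path is u - w - v with w
   a common neighbour not in M. *)
Definition dmv2 (T : finType) (e : rel T) (M : {set T}) : bool :=
  [forall u in M, forall v in M,
     [|| u == v, e u v | [exists w, (w \notin M) && e u w && e w v]]].

(* chi_{mu_2}(G): minimum number of blocks of a partition of V(G) into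
   2-distance mutual-visibility sets (singletons always give a valid partition,
   so the default #|T| is attained). *)
Definition chi_mu2 (T : finType) (e : rel T) : nat :=
  \big[minn/#|T|]_(P : {set {set T}} |
      partition P [set: T] && [forall B in P, dmv2 e B]) #|P|.

(* Main.v *)
Require Import Defs.
From mathcomp Require Import all_boot.

Lemma bigmin_le (I : finType) (P : pred I) (F : I -> nat) a i :
  P i -> \big[minn/a]_(j | P j) F j <= F i.
Proof.
move=> Pi; have : i \in index_enum I by rewrite mem_index_enum.
elim: (index_enum I) => [|x r IH] //; rewrite big_cons in_cons.
case/orP => [/eqP <-|ir]; first by rewrite Pi geq_minl.
case: (P x); last exact: IH.
by rewrite geq_min IH ?orbT.
Qed.

Lemma chi_le_tds (T : finType) (e : rel T) (D : {set T}) :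
  simple_graph e -> total_dominating e D -> chi_mu2 e <= #|D|.
Proof.
move=> [esym eirr] /forallP tD.
pose f v := odflt v [pick u in D | e v u].
have fP v : (f v \in D) && e v (f v).
  rewrite /f; case: pickP => [u /andP[-> ->] //|/= H].
  by have /existsP[u /andP[uD evu]] := tD v; move: (H u); rewrite uD evu.
pose P := preim_partition f [set: T].
apply: (@leq_trans #|P|).
  apply: bigmin_le; rewrite preim_partitionP /=.
  apply/forallP => B; apply/implyP => /imsetP[x _ ->].
  apply/forallP => u; apply/implyP; rewrite inE => /andP[_ /eqP fu].
  apply/forallP => v; apply/implyP; rewrite inE => /andP[_ /eqP fv].
  case: eqP => //= _; apply/orP; right; apply/existsP; exists (f x).
  have /andP[_ ed] := fP (f x).
  have /andP[_ eu] := fP u; have /andP[_ ev] := fP v.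
  rewrite inE /=.
  have -> : e u (f x) by rewrite fu.
  have -> : e (f x) v by rewrite fv esym.
  rewrite !andbT; apply/negP => /andP[_ /eqP E].
  by move: ed; rewrite -E eirr.
rewrite /P /preim_partition /equivalence_partition.
have -> : [set [set y in [set: T] | f x == f y] | x in [set: T]] =
          (fun d => [set y in [set: T] | d == f y]) @: (f @: [set: T]).
  by rewrite -imset_comp.
apply: leq_trans (leq_imset_card _ _) _.
apply: subset_leq_card; apply/subsetP => d /imsetP[x _ ->].
by have /andP[] := fP x.
Qed.

Theorem theorem3p2 (T : finType) (e : rel T) :
  simple_graph e -> no_isolated e -> chi_mu2 e <= gamma_t e.
Proof.
move=> sg ni.
have tT : total_dominating e [set: T].
  by apply/forallP => v; have [u evu] := ni v; apply/existsP; exists u; rewrite inE.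
rewrite /gamma_t; apply: (big_ind (fun m => chi_mu2 e <= m)).
- by rewrite -cardsT; exact: chi_le_tds.
- by move=> x y hx hy; rewrite leq_min hx hy.
- by move=> D hD; exact: chi_le_tds.
Qed.
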